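(* Let $\kappa:\mathbb{R}^2\to[0,\infty]$ be a normalized surface density (a gravitational lens) satisfying the conditions listed in the context. Then $\kappa(x)<\kappa(0)$ for all $x>0$, where for a singular lens $\kappa(0)=+\infty$.
   Context: A gravitational lens (in a single lens plane) is given by a normalized surface density $\kappa$ on the plane $\mathbb{R}^2$ satisfying: (i) Continuity: $\kappa:\mathbb{R}^2\to\mathbb{R}_0^+=[0,\infty)$ is continuous, except possibly at the origin for singular lenses. (ii) Circular symmetry: $\kappa$ depends only on the radius $x=\|\mathbf{x}\|$; write $\kappa=\kappa(x)$. (iii) Finiteness: $\kappa(x)<\infty$ for $x>0$; $\kappa(0)=1/C_1$ for a constant $C_1\ge 0$ (so $\kappa(0)=+\infty$ when $C_1=0$); and $\lim_{x\to\infty}\kappa(x)\,x=C_2$ for a constant $0\le C_2<\infty$. (iv) Self-gravitation: $\kappa(x)<\bar\kappa(x)$ for $x>0$, where $\bar\kappa(x)=\frac{2}{x^2}\int_0^x\kappa(t)\,t\,dt$ is the mean surface density inside radius $x$. The lens is called singular if and only if $C_1=0$, and non-singular otherwise. *)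

(* Defs.v *)
From HB Require Import structures.
From mathcomp Require Import all_boot all_order all_algebra.
From mathcomp Require Import all_classical all_reals all_analysis.
Set Implicit Arguments. Unset Strict Implicit. Unset Printing Implicit Defensive.
Import Order.TTheory GRing.Theory Num.Theory.
Import numFieldNormedType.Exports.
Local Open Scope classical_set_scope.
Local Open Scope ring_scope.

(* Radial profile kappa : [0,oo) -> [0,+oo] (only arguments >= 0 matter).
   Mean surface density inside radius x:
   kbar(x) = 2/x^2 * \int_0^x kappa(t) t dt  (Lebesgue integral, in \bar R). *)
Definition mean_density {R : realType} (kappa : R -> \bar R) (x : R) : \bar R :=
  ((2 / x ^+ 2)%:E *
   \int[@lebesgue_measure R]_(t in `[0%R, x]%classic) (kappa t * t%:E))%E.

Definition kappa_origin {R : realType} (C1 : R) : \bar R :=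
  if C1 == 0 then +oo%E else (C1^-1)%:E.

(* Main.v *)
Require Import Defs.
From HB Require Import structures.
From mathcomp Require Import all_boot all_order all_algebra.
From mathcomp Require Import all_classical all_reals all_analysis.
From mathcomp Require Import ring lra.
Import Order.TTheory GRing.Theory Num.Theory.
Import numFieldNormedType.Exports.
Local Open Scope classical_set_scope.
Local Open Scope ring_scope.

Lemma deriv_half_sq (R : realType) (x : R) : is_derive x (1:R) (fun t : R => t ^+ 2 / 2) x.
Proof.
apply: is_derive_eq.
rewrite !scaler0 add0r. 
have E : forall a b : R, a *: b = a * b by [].
rewrite E [x%:A]E. rewrite /GRing.scale /=. by field.
Qed.

Lemma int_id (R : realType) (a : R) : 0 < a ->
  (\int[@lebesgue_measure R]_(t in `[0%R, a]) (t%:E) = (a ^+ 2 / 2)%:E)%E.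
Proof.
move=> a0.
have dF (x : R) : derivable (fun t : R => t ^+ 2 / 2) x 1 by have := deriv_half_sq R x; case.
have cF x : {for x, continuous (fun t : R => t ^+ 2 / 2)}.
  exact/differentiable_continuous/derivable1_diffP.
rewrite (@continuous_FTC2 R (fun t => t) (fun t => t ^+ 2 / 2) 0 a a0).
- by rewrite expr0n /= mul0r oppr0 adde0.
- by apply: continuous_subspaceT => x; exact: cvg_id.
- split.
  + by move=> x _.
  + apply: cvg_at_right_filter; exact: cF.
  + apply: cvg_at_left_filter; exact: cF.
- move=> x _. rewrite derive1E. by have /@derive_val -> := deriv_half_sq R x.
Qed.

Theorem lemma1 (R : realType) (kappa : R -> \bar R) (C1 C2 : R) :
  (* (iii) constants *)
  0 <= C1 -> 0 <= C2 ->
  (* (iii) finiteness and nonnegativity for x > 0 *)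
  (forall x : R, 0 < x -> (0 <= kappa x)%E /\ (kappa x < +oo)%E) ->
  (* (iii) value at the origin *)
  kappa 0%R = kappa_origin C1 ->
  (* (i) continuity away from the origin *)
  {within `]0, +oo[, continuous (fun x => fine (kappa x))} ->
  (* (i) continuity at the origin for non-singular lenses *)
  (0 < C1 -> {within `[0, +oo[, continuous (fun x => fine (kappa x))}) ->
  (* (iii) asymptotics *)
  (fine (kappa x) * x) @[x --> +oo] --> C2 ->
  (* (iv) self-gravitation *)
  (forall x : R, 0 < x -> (kappa x < mean_density kappa x)%E) ->
  forall x : R, 0 < x -> (kappa x < kappa 0%R)%E.
Proof.
move=> C10 C20 kfin k0 ck ck0 _ sg x x0.
case: (eqVneq C1 0) => [C1e|C1n].
  by rewrite k0 /kappa_origin C1e eqxx; exact: (kfin x x0).2.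
have C1p : 0 < C1 by rewrite lt_def C1n.
have k0e : kappa 0 = (C1^-1)%:E by rewrite k0 /kappa_origin (negbTE C1n).
set g := fun x => fine (kappa x).
have kg t : 0 <= t -> kappa t = (g t)%:E.
  rewrite le_eqVlt => /predU1P[<-|tp]; first by rewrite /g k0e.
  have [h1 h2] := kfin t tp; by rewrite /g fineK // ge0_fin_numE.
have gge0 t : 0 <= t -> 0 <= g t.
  move=> t0; rewrite -lee_fin -kg //; move: t0; rewrite le_eqVlt => /predU1P[<-|tp].
    by rewrite k0e lee_fin invr_ge0.
  exact: (kfin t tp).1.
have g0 : g 0 = C1^-1 by rewrite /g k0e.
rewrite kg ?ltW // k0e lte_fin ltNge; apply/negP => hle.
have cgx (y : R) : {within `[0, y], continuous g}.
  apply: continuous_subspaceW (ck0 C1p) => t /=; rewrite !in_itv /= => /andP[-> _].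
  by [].
have [c cin cmax] := EVT_max (ltW x0) (cgx x).
pose x1 := if c == 0 then x else c.
have [x1p x1le] : 0 < x1 /\ x1 <= x.
  rewrite /x1; case: eqP => [_|cn]; first by split => //.
  by move: cin; rewrite in_itv /= => /andP[c0 cx]; split => //; rewrite lt_def c0 andbT; apply/eqP.
have hmax t : 0 <= t <= x1 -> g t <= g x1.
  move=> /andP[t0 tx1]; rewrite /x1; case: eqP => [c0|cn].
    have := cmax t; rewrite in_itv /= t0 (le_trans tx1 x1le) => /(_ isT).
    by rewrite c0 g0 => /le_trans; apply.
  apply: cmax; rewrite in_itv /= t0 /=; apply: (le_trans tx1); exact: x1le.
suff hm : (mean_density kappa x1 <= kappa x1)%E.
  by have := lt_le_trans (sg x1 x1p) hm; rewrite ltxx.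

rewrite (kg x1 (ltW x1p)).
rewrite /mean_density.
have mD : measurable (`[0%R, x1] : set R) by exact: measurable_itv.
have -> : (\int[@lebesgue_measure R]_(t in `[0%R, x1]) (kappa t * t%:E) =
  \int[@lebesgue_measure R]_(t in `[0%R, x1]) ((g t * t)%:E))%E.
  apply: eq_integral => t; rewrite inE /= in_itv /= => /andP[t0 _].
  by rewrite kg.
have mg : measurable_fun `[0%R, x1] g.
  exact: measurable_realfun.subspace_continuous_measurable_fun (cgx x1).
have le1 : (\int[@lebesgue_measure R]_(t in `[0%R, x1]) ((g t * t)%:E) <=
  \int[@lebesgue_measure R]_(t in `[0%R, x1]) ((g x1)%:E * t%:E))%E.
  apply: ge0_le_integral => //.
  - move=> t; rewrite /= in_itv /= => /andP[t0 _]; rewrite lee_fin mulr_ge0 //.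
    exact: gge0.
  - apply/measurable_realfun.measurable_EFinP; apply: measurable_realfun.measurable_funM => //; exact: measurable_id.
  - apply/measurable_realfun.measurable_EFinP => /=.
    apply: measurable_realfun.measurable_funM => //.
  - move=> t; rewrite /= in_itv /= => /andP[t0 tx]; rewrite -EFinM lee_fin.
    by rewrite ler_wpM2r // hmax // t0.
have eZ : (\int[@lebesgue_measure R]_(t in `[0%R, x1]) ((g x1)%:E * t%:E) =
   (g x1)%:E * \int[@lebesgue_measure R]_(t in `[0%R, x1]) (t%:E))%E.
  apply: ge0_integralZl_EFin => //.
  - by move=> t; rewrite /= in_itv /= => /andP[t0 _]; rewrite lee_fin.
  - by apply: gge0; exact: ltW.
rewrite eZ in le1.
rewrite int_id // -EFinM in le1.
have x10 : 0 <= 2 / x1 ^+ 2 by rewrite divr_ge0 // exprn_ge0 // ltW.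
have h2 : (0 <= (2 / x1 ^+ 2)%:E)%E by rewrite lee_fin.
have H := lee_wpmul2l h2 le1. apply: (le_trans H).
rewrite -EFinM lee_fin le_eqVlt; apply/orP; left; apply/eqP.
have x1n : x1 != 0 by rewrite gt_eqF.
by field.
Qed.
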